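(* Let $\mathcal X,\hat{\mathcal X}$ be finite alphabets, $\{p_\theta\}_{\theta\in\Theta}$ a nonempty family of probability distributions on $\mathcal X$, and $d:\mathcal X\times\hat{\mathcal X}\to[0,\infty)$ a distortion measure. Then the rate distortion function $\hat R^I(D)$ satisfies: (1) $\hat R^I(D)$ is non-increasing in $D$; (2) $\hat R^I(D)$ is a convex function on $[0,+\infty)$.
   Context: For a transition probability matrix $\boldsymbol Q=(q(\hat x|x))$ from $\mathcal X$ to $\hat{\mathcal X}$: maximum expected distortion $\mathbb E_{\boldsymbol Q}[d(X,\hat X)]=\sup_{\theta\in\Theta}\sum_{x,\hat x}p_\theta(x)q(\hat x|x)d(x,\hat x)$; nonlinear mutual information $\overline I[\{p_\theta\}_{\theta\in\Theta};\boldsymbol Q]=\sup_{\theta\in\Theta}\sum_{x,\hat x}p_\theta(x)q(\hat x|x)\log\frac{q(\hat x|x)}{\sum_{x'}q(\hat x|x')p_\theta(x')}$. Rate distortion function: $\hat R^I(D)=\inf\{\overline I[\{p_\theta\};\boldsymbol Q]:\ \boldsymbol Q\text{ with }\mathbb E_{\boldsymbol Q}[d(X,\hat X)]\le D\}$ (infimum of the empty set is $+\infty$). *)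

(* Defs.v *)
From mathcomp Require Import all_boot all_order all_algebra.
From mathcomp Require Import all_classical all_reals all_analysis.
Set Implicit Arguments. Unset Strict Implicit. Unset Printing Implicit Defensive.
Import Order.TTheory GRing.Theory Num.Theory.
Local Open Scope classical_set_scope.
Local Open Scope ring_scope.

Section RD.
Variables (R : realType) (X Xh : finType) (Theta : Type).

Definition is_dist (T : finType) (p : T -> R) : Prop :=
  (forall x, 0 <= p x) /\ \sum_(x : T) p x = 1.

(* a transition probability matrix Q = (q(xh|x)), Q x xh = q(xh|x) *)
Definition is_channel (Q : X -> Xh -> R) : Prop := forall x, is_dist (Q x).

Definition max_exp_distortion (p : Theta -> X -> R) (d : X -> Xh -> R)
    (Q : X -> Xh -> R) : \bar R :=
  ereal_sup [set (\sum_(x : X) \sum_(xh : Xh) p th x * Q x xh * d x xh)%:E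
            | th in [set: Theta]].

Definition out_marg (p : X -> R) (Q : X -> Xh -> R) (xh : Xh) : R :=
  \sum_(x' : X) Q x' xh * p x'.

(* nonlinear mutual information (natural log; terms with p q = 0 vanish) *)
Definition nl_mutual_info (p : Theta -> X -> R) (Q : X -> Xh -> R) : \bar R :=
  ereal_sup [set (\sum_(x : X) \sum_(xh : Xh)
                    p th x * Q x xh * ln (Q x xh / out_marg (p th) Q xh))%:E
            | th in [set: Theta]].

(* rate distortion function; inf of the empty set is +oo *)
Definition rate_distortion (p : Theta -> X -> R) (d : X -> Xh -> R) (D : R)
    : \bar R :=
  ereal_inf [set nl_mutual_info p Q | Q in
     [set Q | is_channel Q /\ (max_exp_distortion p d Q <= D%:E)%E]].

End RD.

(* Main.v *)
Require Import Defs.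
From mathcomp Require Import all_boot all_order all_algebra.
From mathcomp Require Import all_classical all_reals all_analysis.
From mathcomp Require Import ring lra.
Import Order.TTheory GRing.Theory Num.Theory.
Local Open Scope ring_scope.
Section H.
Variable R : realType.

Lemma ln_ge1V (y : R) : 0 < y -> 1 - y^-1 <= ln y.
Proof.
move=> y0; have := expR_ge1Dx (ln y^-1).
rewrite lnK ?posrE ?invr_gt0 // lnV ?posrE // => h.
lra.
Qed.

Lemma piece (w u v c : R) : 0 <= w -> 0 <= u -> 0 <= v -> 0 <= c ->
  (0 < w * u -> 0 < v /\ 0 < c) ->
  w * u * ln c + w * u - w * v * c <= w * u * ln (u / v).
Proof.
move=> w0 u0 v0 c0 h.
have [wu0|wunz] := eqVneq (w * u) 0.
  rewrite wu0 !mul0r; have : 0 <= w * v * c by rewrite !mulr_ge0.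
  lra.
have wup : 0 < w * u by rewrite lt_neqAle eq_sym wunz mulr_ge0.
have [vp cp] := h wup.
have unz : u != 0 by apply: contraNneq wunz => ->; rewrite mulr0.
have up : 0 < u by rewrite lt_neqAle eq_sym unz.
have e : u / v = c * (u / (v * c)).
  by field; apply/andP; split; rewrite gt_eqF.
have q : 0 < u / (v * c) by rewrite divr_gt0 // mulr_gt0.
rewrite e lnM ?posrE // mulrDr -addrA lerD2l.
have := @ln_ge1V _ q; rewrite invf_div => hl.
have : w * u * (1 - v * c / u) <= w * u * ln (u / (v * c)).
  by rewrite ler_pM2l.
suff -> : w * u * (1 - v * c / u) = w * u - w * v * c by [].
by field.
Qed.
End H.
Lemma pos_of_mul (R : realType) (a b : R) : 0 <= a -> 0 <= b -> 0 < a * b -> 0 < a /\ 0 < b.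
Proof.
move=> a0 b0 ab.
split; rewrite lt_neqAle ?a0 ?b0 andbT; apply/eqP=> e; move: ab;
  by rewrite -e ?mul0r ?mulr0 ltxx.
Qed.

Lemma term_convex (R : realType) (p q1 q2 m1 m2 l : R) :
  0 <= p -> 0 <= q1 -> 0 <= q2 -> 0 <= m1 -> 0 <= m2 -> p * q1 <= m1 -> p * q2 <= m2 ->
  0 <= l <= 1 ->
  p * (l * q1 + (1 - l) * q2) * ln ((l * q1 + (1 - l) * q2) / (l * m1 + (1 - l) * m2))
  <= l * (p * q1 * ln (q1 / m1)) + (1 - l) * (p * q2 * ln (q2 / m2)).
Proof.
move=> p0 q10 q20 m10 m20 h1 h2 /andP[l0 l1].
set q := l * q1 + (1 - l) * q2; set m := l * m1 + (1 - l) * m2.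
set c := q / m.
have l1' : 0 <= 1 - l by lra.
have q0 : 0 <= q by rewrite /q addr_ge0 // mulr_ge0.
have m0 : 0 <= m by rewrite /m addr_ge0 // mulr_ge0.
have c0 : 0 <= c by rewrite /c divr_ge0.
have P1 := @piece R (p * l) q1 m1 c (mulr_ge0 p0 l0) q10 m10 c0.
have P2 := @piece R (p * (1 - l)) q2 m2 c (mulr_ge0 p0 l1') q20 m20 c0.
have H1 : 0 < p * l * q1 -> 0 < m1 /\ 0 < c.
  move=> /pos_of_mul [] //; first exact: mulr_ge0.
  move=> /pos_of_mul [] // pp lp qp.
  have mp : 0 < m1 by apply: lt_le_trans h1; rewrite mulr_gt0.
  split=> //; rewrite /c divr_gt0 //.
    have : 0 < l * q1 by rewrite mulr_gt0.
    have : 0 <= (1 - l) * q2 by rewrite mulr_ge0.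
    rewrite /q; lra.
  have : 0 < l * m1 by rewrite mulr_gt0.
  have : 0 <= (1 - l) * m2 by rewrite mulr_ge0.
  rewrite /m; lra.
have H2 : 0 < p * (1 - l) * q2 -> 0 < m2 /\ 0 < c.
  move=> /pos_of_mul [] //; first exact: mulr_ge0.
  move=> /pos_of_mul [] // pp lp qp.
  have mp : 0 < m2 by apply: lt_le_trans h2; rewrite mulr_gt0.
  split=> //; rewrite /c divr_gt0 //.
    have : 0 < (1 - l) * q2 by rewrite mulr_gt0.
    have : 0 <= l * q1 by rewrite mulr_ge0.
    rewrite /q; lra.
  have : 0 < (1 - l) * m2 by rewrite mulr_gt0.
  have : 0 <= l * m1 by rewrite mulr_ge0.
  rewrite /m; lra.
have {}P1 := P1 H1; have {}P2 := P2 H2.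
have E : l * (p * q1 * ln (q1 / m1)) + (1 - l) * (p * q2 * ln (q2 / m2)) =
   p * l * q1 * ln (q1 / m1) + p * (1 - l) * q2 * ln (q2 / m2) by ring.
rewrite E.
apply: le_trans (lerD P1 P2).
have E2 : p * l * q1 * ln c + p * l * q1 - p * l * m1 * c +
  (p * (1 - l) * q2 * ln c + p * (1 - l) * q2 - p * (1 - l) * m2 * c) =
  p * q * ln c + p * q - p * (m * c) by rewrite /q /m; ring.
rewrite E2.
have [me|mnz] := eqVneq m 0.
  rewrite /c me invr0 mulr0 ln0 // !mulr0 subr0 add0r mulr_ge0 //.
have -> : m * c = q by rewrite /c mulrCA divff // mulr1.
lra.
Qed.
Set Implicit Arguments. Unset Strict Implicit.
Definition mi (R : realType) (X Xh : finType) (p : X -> R) (Q : X -> Xh -> R) : R :=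
  \sum_(x : X) \sum_(xh : Xh) p x * Q x xh * ln (Q x xh / out_marg p Q xh).

Definition dst (R : realType) (X Xh : finType) (p : X -> R) (d Q : X -> Xh -> R) : R :=
  \sum_(x : X) \sum_(xh : Xh) p x * Q x xh * d x xh.

Definition mix (R : realType) (X Xh : finType) (l : R) (Q1 Q2 : X -> Xh -> R) :=
  fun x xh => l * Q1 x xh + (1 - l) * Q2 x xh.

Lemma marg_ge0 (R : realType) (X Xh : finType) (p : X -> R) (Q : X -> Xh -> R) xh :
  (forall x, 0 <= p x) -> is_channel Q -> 0 <= out_marg p Q xh.
Proof.
move=> hp hQ; rewrite /out_marg; apply: sumr_ge0 => x _.
by rewrite mulr_ge0 // (proj1 (hQ x)).
Qed.

Lemma marg_ge (R : realType) (X Xh : finType) (p : X -> R) (Q : X -> Xh -> R) x xh :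
  (forall x, 0 <= p x) -> is_channel Q -> p x * Q x xh <= out_marg p Q xh.
Proof.
move=> hp hQ; rewrite /out_marg (bigD1 x) //= mulrC lerDl.
by apply: sumr_ge0 => y _; rewrite mulr_ge0 // (proj1 (hQ y)).
Qed.

Lemma marg_mix (R : realType) (X Xh : finType) (p : X -> R) l (Q1 Q2 : X -> Xh -> R) xh :
  out_marg p (mix l Q1 Q2) xh = l * out_marg p Q1 xh + (1 - l) * out_marg p Q2 xh.
Proof.
rewrite /out_marg /mix !mulr_sumr -big_split /=; apply: eq_bigr => x _; ring.
Qed.

Lemma mix_channel (R : realType) (X Xh : finType) l (Q1 Q2 : X -> Xh -> R) :
  0 <= l <= 1 -> is_channel Q1 -> is_channel Q2 -> is_channel (mix l Q1 Q2).
Proof.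
move=> /andP[l0 l1] h1 h2 x; split.
  move=> xh; rewrite /mix addr_ge0 // mulr_ge0 ?(proj1 (h1 x)) ?(proj1 (h2 x)) //.
  lra.
rewrite /mix big_split /= -!mulr_sumr (proj2 (h1 x)) (proj2 (h2 x)); ring.
Qed.

Lemma mi_convex (R : realType) (X Xh : finType) (p : X -> R) l (Q1 Q2 : X -> Xh -> R) :
  is_dist p -> is_channel Q1 -> is_channel Q2 -> 0 <= l <= 1 ->
  mi p (mix l Q1 Q2) <= l * mi p Q1 + (1 - l) * mi p Q2.
Proof.
move=> [hp _] h1 h2 hl.
rewrite /mi !mulr_sumr -big_split /=; apply: ler_sum => x _.
rewrite !mulr_sumr -big_split /=; apply: ler_sum => xh _.
rewrite marg_mix /mix.
apply: term_convex => //; rewrite ?(proj1 (h1 x)) ?(proj1 (h2 x)) ?marg_ge0 //.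
  exact: marg_ge.
exact: marg_ge.
Qed.

Lemma mi_ge0 (R : realType) (X Xh : finType) (p : X -> R) (Q : X -> Xh -> R) :
  is_dist p -> is_channel Q -> 0 <= mi p Q.
Proof.
move=> [hp hs] hQ.
have H : forall x xh, p x * Q x xh - p x * out_marg p Q xh <=
    p x * Q x xh * ln (Q x xh / out_marg p Q xh).
  move=> x xh.
  have := @piece R (p x) (Q x xh) (out_marg p Q xh) 1 (hp x) (proj1 (hQ x) xh)
    (marg_ge0 xh hp hQ) ler01.
  rewrite ln1 mulr0 add0r mulr1; apply=> pos; split=> //.
  exact: lt_le_trans pos (marg_ge _ _ hp hQ).
apply: le_trans (ler_sum _ (fun x _ => ler_sum _ (fun xh _ => H x xh))).
rewrite le_eqVlt; apply/orP; left; apply/eqP.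
have E1 : \sum_x \sum_xh (p x * Q x xh - p x * out_marg p Q xh) =
   \sum_x p x * \sum_xh Q x xh - \sum_xh (\sum_x p x) * out_marg p Q xh.
  transitivity (\sum_x (p x * \sum_xh Q x xh) - \sum_x \sum_xh p x * out_marg p Q xh).
    by rewrite -sumrB; apply: eq_bigr => x _; rewrite sumrB mulr_sumr.
  by congr (_ - _); rewrite exchange_big /=; apply: eq_bigr => xh _; rewrite mulr_suml.
rewrite E1 hs.
have -> : \sum_x p x * \sum_xh Q x xh = 1.
  by rewrite -hs; apply: eq_bigr => x _; rewrite (proj2 (hQ x)) mulr1.
rewrite /out_marg.
have -> : \sum_xh 1 * (\sum_x' Q x' xh * p x') = \sum_x' p x' * \sum_xh Q x' xh.
  under eq_bigr => xh _ do rewrite mul1r.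
  rewrite exchange_big /=; apply: eq_bigr => x _; rewrite mulr_sumr.
  by apply: eq_bigr => xh _; rewrite mulrC.
have -> : \sum_x' p x' * \sum_xh Q x' xh = 1.
  by rewrite -hs; apply: eq_bigr => x _; rewrite (proj2 (hQ x)) mulr1.
by rewrite subrr.
Qed.

Lemma dst_mix (R : realType) (X Xh : finType) (p : X -> R) (d : X -> Xh -> R) l (Q1 Q2 : X -> Xh -> R) :
  dst p d (mix l Q1 Q2) = l * dst p d Q1 + (1 - l) * dst p d Q2.
Proof.
rewrite /dst !mulr_sumr -big_split /=; apply: eq_bigr => x _.
rewrite !mulr_sumr -big_split /=; apply: eq_bigr => xh _; rewrite /mix; ring.
Qed.
Theorem theorem13 (R : realType) (X Xh : finType) (Theta : Type)
    (p : Theta -> X -> R) (d : X -> Xh -> R) :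
  inhabited Theta ->
  (forall th, is_dist (p th)) ->
  (forall x xh, 0 <= d x xh) ->
  (forall D1 D2 : R, D1 <= D2 ->
     (rate_distortion p d D2 <= rate_distortion p d D1)%E) /\
  (forall D1 D2 lam : R, 0 <= D1 -> 0 <= D2 -> 0 <= lam <= 1 ->
     (rate_distortion p d (lam * D1 + (1 - lam) * D2)
        <= lam%:E * rate_distortion p d D1
           + (1 - lam)%:E * rate_distortion p d D2)%E).
Proof.
move=> [th0] hp hd.
have nmi_ge : forall (Q : X -> Xh -> R) th, ((mi (p th) Q)%:E <= nl_mutual_info p Q)%E.
  by move=> Q th; apply: le_ereal_sup_tmp; exists (mi (p th) Q)%:E => //; exists th.
have nmi_ge0 : forall (Q : X -> Xh -> R), is_channel Q -> (0 <= nl_mutual_info p Q)%E.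
  move=> Q hQ; apply: le_trans (nmi_ge Q th0); rewrite lee_fin; exact: mi_ge0.
have rd_ge0 : forall D : R, (0 <= rate_distortion p d D)%E.
  move=> D; apply: le_ereal_inf_tmp => _ [Q [hQ _] <-]; exact: nmi_ge0.
split.
  move=> D1 D2 le12; apply: ereal_inf_le_tmp => _ [Q [hQ hD] <-].
  exists Q => //; split => //; apply: le_trans hD _; by rewrite lee_fin.
move=> D1 D2 l D10 D20 /andP[l0 l1].
have [->|ln0] := eqVneq l 0.
  by rewrite mul0r add0r subr0 mul1r mul0e add0e mul1e.
have [->|ln1] := eqVneq l 1.
  by rewrite mul1r subrr mul0r addr0 mul0e adde0 mul1e.
have lp : 0 < l by rewrite lt_neqAle eq_sym ln0.
have lp' : 0 < 1 - l by rewrite subr_gt0 lt_neqAle ln1.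
have nN : forall D : R, (rate_distortion p d D != -oo)%E.
  by move=> D; rewrite gt_eqF // (lt_le_trans ltNy0 (rd_ge0 D)).
have := rd_ge0 D1; case E1: (rate_distortion p d D1) => [r1| |] // r1ge; last first.
  rewrite gt0_muley ?lte_fin // addye ?leey // gt_eqF //.
  by apply: (lt_le_trans ltNy0); apply: mule_ge0 => //; rewrite lee_fin ltW.
have := rd_ge0 D2; case E2: (rate_distortion p d D2) => [r2| |] // r2ge; last first.
  by rewrite gt0_muley ?lte_fin // addey ?leey // gt_eqF.
apply/lee_addgt0Pr => e e0.
have h1 : (rate_distortion p d D1 < (r1 + e)%:E)%E by rewrite E1 lte_fin ltrDl.
have [_ [Q1 [hc1 hd1] <-] lt1] := ereal_inf_lt h1.
have h2 : (rate_distortion p d D2 < (r2 + e)%:E)%E by rewrite E2 lte_fin ltrDl.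
have [_ [Q2 [hc2 hd2] <-] lt2] := ereal_inf_lt h2.
have hl : 0 <= l <= 1 by rewrite l0 l1.
apply: (@le_trans _ _ (nl_mutual_info p (mix l Q1 Q2))).
  apply: ge_ereal_inf; exists (nl_mutual_info p (mix l Q1 Q2)) => //.
  exists (mix l Q1 Q2) => //; split; first exact: mix_channel.
  apply: ge_ereal_sup => _ [th _ <-].
  have -> : (\sum_(x : X) \sum_(xh : Xh) p th x * mix l Q1 Q2 x xh * d x xh) =
     dst (p th) d (mix l Q1 Q2) by [].
  rewrite dst_mix lee_fin.
  have g1 : dst (p th) d Q1 <= D1.
    rewrite -lee_fin; apply: le_trans hd1; apply: le_ereal_sup_tmp.
    by exists (dst (p th) d Q1)%:E => //; exists th.
  have g2 : dst (p th) d Q2 <= D2.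
    rewrite -lee_fin; apply: le_trans hd2; apply: le_ereal_sup_tmp.
    by exists (dst (p th) d Q2)%:E => //; exists th.
  by rewrite lerD // ler_wpM2l // ltW.
apply: (@le_trans _ _ (l%:E * (nl_mutual_info p Q1) + (1 - l)%:E * nl_mutual_info p Q2)%E).
  apply: ge_ereal_sup => _ [th _ <-].
  apply: (@le_trans _ _ (l * mi (p th) Q1 + (1 - l) * mi (p th) Q2)%:E).
    by rewrite lee_fin; apply: mi_convex.
  by rewrite EFinD !EFinM leeD // lee_wpmul2l // lee_fin ltW.
apply: (@le_trans _ _ (l%:E * (r1 + e)%:E + (1 - l)%:E * (r2 + e)%:E)%E).
  by rewrite leeD // lee_wpmul2l // ?lee_fin ?ltW // ltW.
rewrite -!EFinM -!EFinD lee_fin; lra.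
Qed.
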